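(* Let $(\mathcal{C},\psi)$ be a limited t-pair with $\operatorname{typ}(\mathcal{U}^{ai}_{\mathcal{C}\psi})=\alpha$. Then $\operatorname{typ}(\mathcal{U}^{di}_{\mathcal{C}\psi})\in\{\alpha,\beta\}$.
   Context: Let $\mathbb{N}=\{0,1,2,\dots\}$; for an integer $k\ge 2$ let $E_k=\{0,1,\dots,k-1\}$; let $\mathcal{P}(\mathbb{N})$ be the set of nonempty finite subsets of $\mathbb{N}$. Let $F$ be a nonempty set (of attribute names). A decision table $T\in\mathcal{M}_k(F)$ is a rectangular table with $n\ge 1$ columns labeled with attributes $f_1,\dots,f_n\in F$ (any two columns labeled with the same attribute are equal), whose rows are pairwise different tuples from $E_k^n$ (the set of rows may be empty), each row being labeled with a set of decisions from $\mathcal{P}(\mathbb{N})$. Write $At(T)=\{f_1,\dots,f_n\}$ and $\Delta(T)$ for the set of rows. For a word $\alpha=(f_{i_1},\delta_1)\cdots(f_{i_m},\delta_m)$ with $f_{i_j}\in At(T)$, $\delta_j\in E_k$, the subtable $T\alpha$ consists of the rows of $T$ having value $\delta_j$ in column $f_{i_j}$ for all $j$ ($T\lambda=T$ for the empty word $\lambda$). Operations on tables: (1) removal of a column from a table with at least two columns (if groups of equal rows appear, only the first row of each group, with its decision set, is kept); (2) changing of decisions: the decision sets attached to rows are replaced arbitrarily by sets from $\mathcal{P}(\mathbb{N})$; (3) permutation of columns: swap two columns together with their attribute labels; (4) duplication of columns: add a copy of a column (with its label) next to it. A set $\mathcal{C}\subseteq\mathcal{M}_k(F)$ is a closed class if every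 table obtained from a table of $\mathcal{C}$ by finitely many such operations belongs to $\mathcal{C}$. A decision tree over $\mathcal{M}_k(F)$ is a finite directed tree with a root (unique node with no entering edge) and at least two nodes such that the root and the edges leaving the root are unlabeled, each worker node (neither root nor terminal) is labeled with an attribute from $F$, each edge leaving a worker node is labeled with a number from $E_k$, and each terminal node is labeled with a number from $\mathbb{N}$. For a complete path $\xi$ (root to terminal node) whose worker nodes are labeled $f_{j_1},\dots,f_{j_m}$ in order, with the edges leaving them labeled $\delta_1,\dots,\delta_m$, put $\pi(\xi)=(f_{j_1},\delta_1)\cdots(f_{j_m},\delta_m)$, $\varphi(\xi)=f_{j_1}\cdots f_{j_m}$ (both empty if $m=0$), and let $\tau(\xi)$ be the label of its terminal node. A nondeterministic decision tree for $T$ is a decision tree $\Gamma$ whose worker-node attributes lie in $At(T)$, such that $\bigcup_{\xi}\Delta(T\pi(\xi))=\Delta(T)$ (union over complete paths), and for every row $r\in\Delta(T)$ and every complete path $\xi$ with $r\in\Delta(T\pi(\xi))$, $\tau(\xi)$ belongs to the decision set of $r$. A decision tree is deterministic if exactly one edge leaves the root and the edges leaving each worker node have pairwise different labels; a deterministic decision tree for $T$ is a deterministic decision tree that is a nondeterministic decision tree for $T$. A complexity measure over $\mathcal{M}_k(F)$ is any map $\psi:F^*\to\mathbb{N}$, where $F^*$ is the set of finite words over $F$ including the empty word $\lambda$. It is limited if for all words (a) $\psi(\alpha_1\alpha_2)\le\psi(\alpha_1)+\psi(\alpha_2)$, (b) $\psi(\alpha_1\alpha_2\alpha_3)\ge\psi(\alpha_1\alpha_3)$,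 (c) $\psi(\alpha)\ge|\alpha|$. For a tree, $\psi(\Gamma)=\max_\xi\psi(\varphi(\xi))$ over complete paths. For $T$ with columns labeled $f_1,\dots,f_n$: $\psi^i(T)=\psi(f_1\cdots f_n)$, $\psi^d(T)$ is the minimum complexity of a deterministic decision tree for $T$, $\psi^a(T)$ the minimum complexity of a nondeterministic decision tree for $T$. A t-pair $(\mathcal{C},\psi)$ consists of a closed class $\mathcal{C}\subseteq\mathcal{M}_k(F)$ and a complexity measure $\psi$ over $\mathcal{M}_k(F)$; it is limited if $\psi$ is limited. For $b,c\in\{i,d,a\}$ define the partial function $\mathcal{U}^{bc}_{\mathcal{C}\psi}(n)=\max\{\psi^b(T):T\in\mathcal{C},\psi^c(T)\le n\}$ (defined iff this set is nonempty and finite). For a partial function $g:\mathbb{N}\to\mathbb{N}$ with domain $\mathrm{Dom}(g)$, let $\mathrm{Dom}^+(g)=\{n\in\mathrm{Dom}(g):g(n)\ge n\}$, $\mathrm{Dom}^-(g)=\{n\in\mathrm{Dom}(g):g(n)\le n\}$. Its type $\operatorname{typ}(g)$ is: $\alpha$ if $\mathrm{Dom}(g)$ is infinite and $g$ is bounded above; $\beta$ if $\mathrm{Dom}(g)$ is infinite, $\mathrm{Dom}^+(g)$ is finite and $g$ is unbounded above; $\gamma$ if $\mathrm{Dom}^+(g)$ and $\mathrm{Dom}^-(g)$ are both infinite; $\delta$ if $\mathrm{Dom}(g)$ is infinite and $\mathrm{Dom}^-(g)$ is finite; $\epsilon$ if $\mathrm{Dom}(g)$ is finite. *)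

(* Defs.v *)
From mathcomp Require Import all_boot.
From mathcomp Require Import finmap.
From Stdlib Require List.

Set Implicit Arguments.
Unset Strict Implicit.
Unset Printing Implicit Defensive.

Local Open Scope fset_scope.

Section Tables.
Variable F : Type.

Record table := Table {
  tattr : seq F;
  trows : seq (seq nat * {fset nat}) }.

Definition has_val (T : table) (r : seq nat) (f : F) (d : nat) : Prop :=
  List.In (f, d) (zip (tattr T) r).

Definition wf_table (k : nat) (T : table) : Prop :=
  0 < size (tattr T) /\
  uniq (map fst (trows T)) /\
  (forall r, r \in trows T ->
     [/\ size r.1 = size (tattr T), all (fun x => x < k) r.1 & r.2 != fset0]) /\
  (* any two columns labelled with the same attribute are equal *)
  (forall r, r \in trows T -> forall f d d',
     has_val T r.1 f d -> has_val T r.1 f d' -> d = d').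

Definition inAt (T : table) (f : F) : Prop := List.In f (tattr T).

Definition in_sub (T : table) (alpha : seq (F * nat))
    (r : seq nat * {fset nat}) : Prop :=
  r \in trows T /\ (forall fd, List.In fd alpha -> has_val T r.1 fd.1 fd.2).

Definition rem_at {A : Type} (i : nat) (s : seq A) : seq A :=
  take i s ++ drop i.+1 s.

Fixpoint dedup_aux (seen : seq (seq nat)) (s : seq (seq nat * {fset nat})) :=
  match s with
  | [::] => [::]
  | r :: s' => if r.1 \in seen then dedup_aux seen s'
               else r :: dedup_aux (r.1 :: seen) s'
  end.
Definition dedup_rows s := dedup_aux [::] s.

Definition swap_idx (i j l : nat) : nat :=
  if l == i then j else if l == j then i else l.

Definition swap_seq {A : Type} (i j : nat) (s : seq A) : seq A :=
  match s with
  | [::] => [::]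
  | x0 :: _ => [seq nth x0 s (swap_idx i j l) | l <- iota 0 (size s)]
  end.

Definition dup_at {A : Type} (i : nat) (s : seq A) : seq A :=
  take i.+1 s ++ drop i s.

Inductive op_step : table -> table -> Prop :=
| op_remove T i :
    1 < size (tattr T) -> i < size (tattr T) ->
    op_step T (Table (rem_at i (tattr T))
                     (dedup_rows [seq (rem_at i r.1, r.2) | r <- trows T]))
| op_change T (D : seq {fset nat}) :
    size D = size (trows T) -> all (fun X => X != fset0) D ->
    op_step T (Table (tattr T) (zip (map fst (trows T)) D))
| op_swap T i j :
    i < size (tattr T) -> j < size (tattr T) ->
    op_step T (Table (swap_seq i j (tattr T))
                     [seq (swap_seq i j r.1, r.2) | r <- trows T])
| op_dup T i :
    i < size (tattr T) ->
    op_step T (Table (dup_at i (tattr T))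
                     [seq (dup_at i r.1, r.2) | r <- trows T]).

Inductive op_reach : table -> table -> Prop :=
| reach_refl T : op_reach T T
| reach_step T1 T2 T3 : op_step T1 T2 -> op_reach T2 T3 -> op_reach T1 T3.

Definition closed_class (k : nat) (C : table -> Prop) : Prop :=
  (forall T, C T -> wf_table k T) /\
  (forall T T', C T -> op_reach T T' -> C T').

(* Decision trees.  A tree is given by the list of subtrees hanging    *)
(* from the (unlabelled) root; a node is either terminal (labelled by  *)
(* a number) or a worker node labelled by an attribute, with a list of *)
(* outgoing edges labelled by numbers.                                 *)
Inductive node :=
| Leaf of nat
| Work of F & seq (nat * node).

Definition dtree := seq node.

Fixpoint wf_node (k : nat) (v : node) : bool :=
  match v with
  | Leaf _ => true
  | Work _ ch => (0 < size ch) && all (fun e => (e.1 < k) && wf_node k e.2) ch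
  end.

(* a decision tree over M_k(F): at least two nodes *)
Definition wf_tree (k : nat) (G : dtree) : bool :=
  (0 < size G) && all (wf_node k) G.

Fixpoint node_attrs (v : node) : seq F :=
  match v with
  | Leaf _ => [::]
  | Work f ch => f :: flatten (map (fun e => node_attrs e.2) ch)
  end.

Definition tree_attrs (G : dtree) : seq F := flatten (map node_attrs G).

Fixpoint npaths (v : node) : seq (seq (F * nat) * nat) :=
  match v with
  | Leaf d => [:: ([::], d)]
  | Work f ch =>
      flatten (map (fun e => map (fun p => ((f, e.1) :: p.1, p.2)) (npaths e.2)) ch)
  end.

Definition paths (G : dtree) := flatten (map npaths G).

Fixpoint det_node (v : node) : bool :=
  match v with
  | Leaf _ => true
  | Work _ ch => uniq (map fst ch) && all (fun e => det_node e.2) ch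
  end.

Definition det_tree (G : dtree) : bool := (size G == 1) && all det_node G.

Definition is_ndt (k : nat) (T : table) (G : dtree) : Prop :=
  wf_tree k G /\
  (forall f, List.In f (tree_attrs G) -> inAt T f) /\
  (forall r, (exists xi, List.In xi (paths G) /\ in_sub T xi.1 r) <-> r \in trows T) /\
  (forall r xi, r \in trows T -> List.In xi (paths G) -> in_sub T xi.1 r ->
     xi.2 \in r.2).

Definition is_dt (k : nat) (T : table) (G : dtree) : Prop :=
  det_tree G /\ is_ndt k T G.

Definition limited (psi : seq F -> nat) : Prop :=
  (forall a1 a2, psi (a1 ++ a2) <= psi a1 + psi a2) /\
  (forall a1 a2 a3, psi (a1 ++ a2 ++ a3) >= psi (a1 ++ a3)) /\
  (forall a, psi a >= size a).

Definition tree_cost (psi : seq F -> nat) (G : dtree) : nat :=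
  \max_(xi <- paths G) psi (map fst xi.1).

Definition is_min (P : nat -> Prop) (m : nat) : Prop :=
  P m /\ forall x, P x -> m <= x.
Definition is_max (P : nat -> Prop) (m : nat) : Prop :=
  P m /\ forall x, P x -> x <= m.

Inductive kind := Ki | Kd | Ka.

Definition psi_kind (k : nat) (psi : seq F -> nat) (b : kind) (T : table) (m : nat)
  : Prop :=
  match b with
  | Ki => m = psi (tattr T)
  | Kd => is_min (fun c => exists G, is_dt k T G /\ tree_cost psi G = c) m
  | Ka => is_min (fun c => exists G, is_ndt k T G /\ tree_cost psi G = c) m
  end.

Definition U_graph (k : nat) (C : table -> Prop) (psi : seq F -> nat) (b c : kind)
    (n m : nat) : Prop :=
  is_max (fun x => exists T x', C T /\ psi_kind k psi b T x /\
                                psi_kind k psi c T x' /\ x' <= n) m.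

End Tables.

Definition finite_nat (P : nat -> Prop) : Prop :=
  exists s : seq nat, forall n, P n -> n \in s.

Section Typ.
Variable g : nat -> nat -> Prop.
Definition Dom n := exists m, g n m.
Definition DomP n := exists m, g n m /\ n <= m.
Definition DomM n := exists m, g n m /\ m <= n.
Definition bounded_above := exists b, forall n m, g n m -> m <= b.
End Typ.

Inductive ftype := TAlpha | TBeta | TGamma | TDelta | TEpsilon.

Definition typ_is (g : nat -> nat -> Prop) (t : ftype) : Prop :=
  match t with
  | TAlpha => ~ finite_nat (Dom g) /\ bounded_above g
  | TBeta => ~ finite_nat (Dom g) /\ finite_nat (DomP g) /\ ~ bounded_above g
  | TGamma => ~ finite_nat (DomP g) /\ ~ finite_nat (DomM g)
  | TDelta => ~ finite_nat (Dom g) /\ finite_nat (DomM g)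
  | TEpsilon => finite_nat (Dom g)
  end.

(* Main.v *)
Require Import Defs.
From mathcomp Require Import all_boot finmap zify.
From Stdlib Require Import Classical IndefiniteDescription.
Set Implicit Arguments.
Unset Strict Implicit.
Unset Printing Implicit Defensive.

Local Open Scope fset_scope.

Lemma In_nth (A : Type) (x0 : A) (s : seq A) j : j < size s -> List.In (nth x0 s j) s.
Proof. elim: s j => [|a s IH] [|j] //= H; [by left | right; exact: IH]. Qed.

Lemma In_flatten (A : Type) (x : A) (ss : seq (seq A)) :
  List.In x (flatten ss) <-> exists s, List.In s ss /\ List.In x s.
Proof.
elim: ss => [|s ss IH] /=; first by split=> // [[s []]].
rewrite List.in_app_iff IH; split.
- case=> [H|[s' [H1 H2]]]; [by exists s; split; [left|] | by exists s'; split; [right|]].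
- case=> s' [[<-|H1] H2]; [by left | by right; exists s'].
Qed.

Lemma In_map (A B : Type) (f : A -> B) (y : B) (s : seq A) :
  List.In y (map f s) <-> exists x, List.In x s /\ y = f x.
Proof.
elim: s => [|a s IH] /=; first by split=> // [[x []]].
rewrite IH; split.
- case=> [<-|[x [H1 H2]]]; [by exists a; split; [left|] | by exists x; split; [right|]].
- case=> x [[<-|H1] H2]; [by left | by right; exists x].
Qed.

Lemma In_mem (A : eqType) (x : A) s : List.In x s <-> x \in s.
Proof.
elim: s => [|a s IH] //=; rewrite in_cons IH; split.
- by case=> [->|->]; rewrite ?eqxx ?orbT.
- by case/orP=> [/eqP->|]; [left|right].
Qed.

Lemma In_mask (A : Type) (x0 : A) (x : A) (m : bitseq) (s : seq A) :
  List.In x (mask m s) -> exists j, [/\ j < size s, nth false m j & x = nth x0 s j].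
Proof.
elim: s m => [|a s IH] [|b m] //= .
case: b => /=.
- case=> [<-|/IH [j [H1 H2 H3]]]; first by exists 0.
  by exists j.+1.
- move=> /IH [j [H1 H2 H3]]; by exists j.+1.
Qed.

Lemma mask_In (A : Type) (x0 : A) (m : bitseq) (s : seq A) j :
  j < size s -> nth false m j -> List.In (nth x0 s j) (mask m s).
Proof.
elim: s m j => [|a s IH] [|b m] [|j] //=.
- by move=> _ ->; left.
- move=> H1 H2; case: b => /=; [right|]; exact: IH.
Qed.

Lemma mask_zip' (A B : Type) (m : bitseq) (s : seq A) (t : seq B) :
  size s = size t -> zip (mask m s) (mask m t) = mask m (zip s t).
Proof.
elim: s t m => [|a s IH] [|b t] [|c m] //= [] H.
by case: c => /=; rewrite IH.
Qed.

Lemma count_inj (A B : eqType) (s : seq A) (L : seq B) (P : A -> B -> Prop) :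
  uniq s -> (forall x, x \in s -> exists y, y \in L /\ P x y) ->
  (forall x x' y, x \in s -> x' \in s -> P x y -> P x' y -> x = x') ->
  size s <= size L.
Proof.
elim: s L => [|a s IH] L //= /andP [Ha Hu] H1 H2.
have [y [Hy Py]] := H1 a (mem_head _ _).
rewrite (perm_size (perm_to_rem Hy)) /= ltnS; apply: IH => //.
- move=> x Hx; have [y' [Hy' Py']] := H1 x (mem_behead (s:=a::s) Hx).
  exists y'; split => //.
  case: (eqVneq y' y) => [E|Ne].
  + subst y'; have E := H2 _ _ _ (mem_behead (s:=a::s) Hx) (mem_head _ _) Py' Py.
    by subst x; rewrite Hx in Ha.
  + by move: Hy'; rewrite (perm_mem (perm_to_rem Hy)) in_cons (negbTE Ne).
- move=> x x' z Hx Hx'; apply: H2; exact: (mem_behead (s:=a::s)).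
Qed.

Local Open Scope fset_scope.

Lemma all_In (A : Type) (p : pred A) (s : seq A) : (forall x, List.In x s -> p x) -> all p s.
Proof. elim: s => [|a s IH] //= H; rewrite H /=; [apply: IH => x Hx; apply: H; by right | by left]. Qed.

Lemma choice_list (A : Type) (P : nat -> A -> Prop) (l : seq nat) :
  (forall w, w \in l -> exists v, P w v) ->
  exists ch : seq (nat * A), map fst ch = l /\ forall e, List.In e ch -> P e.1 e.2.
Proof.
elim: l => [|w l IH] H; first by exists [::].
have [v Hv] := H w (mem_head _ _).
have [ch [H1 H2]] := IH (fun w' Hw' => H w' (mem_behead (s:=w::l) Hw')).
exists ((w, v) :: ch); split; first by rewrite /= H1.
by move=> e /= [<-|He] //; apply: H2.
Qed.

Lemma In_npaths_Work (F : Type) (f : F) ch xi :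
  List.In xi (npaths (Work f ch)) <->
  exists e, List.In e ch /\ exists p, List.In p (npaths e.2) /\ xi = ((f, e.1) :: p.1, p.2).
Proof.
rewrite /= In_flatten; split.
- move=> [s [/In_map [e [He ->]] /In_map [p [Hp ->]]]].
  by exists e; split=> //; exists p.
- move=> [e [He [p [Hp ->]]]].
  exists (map (fun p => ((f, e.1) :: p.1, p.2)) (npaths e.2)); split.
  + by apply/In_map; exists e.
  + by apply/In_map; exists p.
Qed.

Lemma bigmax_In_le (A : Type) (g : A -> nat) (s : seq A) X :
  (forall x, List.In x s -> g x <= X) -> \max_(x <- s) g x <= X.
Proof.
elim: s => [|a s IH] H; first by rewrite big_nil.
rewrite big_cons geq_max H /=; [|by left].
by apply: IH => x Hx; apply: H; right.
Qed.

Lemma bigmax_In_ge (A : Type) (g : A -> nat) (s : seq A) x :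
  List.In x s -> g x <= \max_(y <- s) g y.
Proof.
elim: s => [|a s IH] //= [<-|Hx]; rewrite big_cons.
- exact: leq_maxl.
- exact: leq_trans (IH Hx) (leq_maxr _ _).
Qed.

Notation row := (seq nat * {fset nat})%type.
Definition col (j : nat) (r : row) := nth 0 r.1 j.
Definition agree (S : seq nat) (t r : row) := all (fun j => col j r == col j t) S.
Definition Aset (R : seq row) S t := [seq r <- R | agree S t r].

Section Builder.
Variables (F : Type) (f0 : F) (k : nat) (T : table F).
Hypothesis wfT : wf_table k T.
Local Notation m := (size (tattr T)).

Definition consistent (r : row) (al : seq (F*nat)) :=
  forall fd, List.In fd al -> has_val T r.1 fd.1 fd.2.

Variable LQ : F -> Prop.

Definition goodnode (R : seq row) (v : node F) (B : nat) :=
 [/\ wf_node k v, det_node v, (forall f, List.In f (node_attrs v) -> inAt T f),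
   (forall xi, List.In xi (npaths v) -> size xi.1 <= B /\ (forall fd, List.In fd xi.1 -> LQ fd.1)) &
   ((forall r, r \in R -> exists xi, List.In xi (npaths v) /\ consistent r xi.1) /\
   (forall xi r, List.In xi (npaths v) -> r \in R -> consistent r xi.1 -> xi.2 \in r.2))].

Lemma goodnode_mono R v B B' : B <= B' -> goodnode R v B -> goodnode R v B'.
Proof.
move=> HB [H1 H2 H3 H4 H56]; split=> // xi Hxi.
have [Hs Hl] := H4 xi Hxi; split=> //; exact: leq_trans HB.
Qed.

Lemma wf_row r : r \in trows T -> [/\ size r.1 = m, all (fun x => x < k) r.1 & r.2 != fset0].
Proof. by case: wfT => _ [_ [H _]] /H. Qed.

Lemma wf_lab r f d d' : r \in trows T -> has_val T r.1 f d -> has_val T r.1 f d' -> d = d'.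
Proof. by case: wfT => _ [_ [_ H]] /H; apply. Qed.

Lemma has_val_col r j : r \in trows T -> j < m -> has_val T r.1 (nth f0 (tattr T) j) (col j r).
Proof.
move=> Hr Hj; have [Hs _ _] := wf_row Hr.
rewrite /has_val /col.
have -> : (nth f0 (tattr T) j, nth 0 r.1 j) = nth (f0, 0) (zip (tattr T) r.1) j.
  by rewrite nth_zip ?Hs.
apply: In_nth. by rewrite size_zip Hs minnn. Qed.

Lemma leaf_good R : {subset R <= trows T} -> size R <= 1 -> exists v, goodnode R v 0.
Proof.
move=> HR; case: R HR => [|r [|r' R]] HR //= _.
- exists (Leaf F 0); split=> //=.
  by move=> xi [<-|] //.
- have [_ _ /fset0Pn [d Hd]] := wf_row (HR r (mem_head _ _)).
  exists (Leaf F d); split=> //=.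
  + by move=> xi [<-|] //.
  + split.
    * by move=> r0; rewrite inE => /eqP ->; exists ([::], d); split; [left|].
    * by move=> xi r0 [<-|] // ; rewrite inE => /eqP ->.
Qed.

Lemma round_good (S : seq nat) (B : nat) :
  (forall j, j \in S -> j < m /\ LQ (nth f0 (tattr T) j)) ->
  forall R : seq row, {subset R <= trows T} -> R != [::] ->
  (forall t, t \in R -> exists v, goodnode (Aset R S t) v B) ->
  exists v, goodnode R v (size S + B).
Proof.
elim: S => [|j S IH] HS R HR Rn0 Hc.
- case: R HR Rn0 Hc => [|t R] // HR _ Hc.
  have [v Hv] := Hc t (mem_head _ _).
  by exists v; move: Hv; rewrite /Aset (eq_filter (a2 := predT)) // filter_predT.
- have [Hjm HjL] := HS j (mem_head _ _).
  have HS' : forall j', j' \in S -> j' < m /\ LQ (nth f0 (tattr T) j').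
    by move=> j' Hj'; apply: HS; rewrite in_cons Hj' orbT.
  pose vals := undup (map (col j) R).
  pose Rw w := [seq r <- R | col j r == w].
  have Hch : forall w, w \in vals -> exists v, goodnode (Rw w) v (size S + B).
    move=> w; rewrite mem_undup => /mapP [r0 Hr0 Hw].
    apply: IH => //.
    + by move=> r; rewrite mem_filter => /andP [_ /HR].
    + apply/eqP => E.
      have : r0 \in Rw w by rewrite mem_filter Hr0 -Hw eqxx.
      by rewrite E.
    + move=> t; rewrite mem_filter => /andP [/eqP Ht HtR].
      have [v Hv] := Hc t HtR; exists v; move: Hv.
      rewrite /Aset -filter_predI; congr goodnode; apply: eq_filter => r /=.
      by rewrite /agree /= -Ht andbC.
  have [ch [Hch1 Hch2]] := choice_list Hch.
  pose f := nth f0 (tattr T) j.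
  exists (Work f ch); split.
  + rewrite /= -(size_map fst) Hch1 /=.
    apply/andP; split.
      have [r Hr] : exists r, r \in R by move: Rn0; case: (R) => [|r R'] // _; exists r; rewrite mem_head.
      have : col j r \in vals by rewrite mem_undup; apply: map_f.
      by case: (vals).
    apply: all_In => e He; have [H1 _ _ _ _] := Hch2 e He; rewrite H1 andbT.
    have : e.1 \in vals by rewrite -Hch1; apply/In_mem; apply/In_map; exists e.
    rewrite mem_undup => /mapP [r Hr ->].
    have [Hs Hk _] := wf_row (HR r Hr).
    by apply: (allP Hk); apply: mem_nth; rewrite Hs.
  + rewrite /= Hch1 undup_uniq /=.
    by apply: all_In => e He; have [_ H2 _ _ _] := Hch2 e He.
  + move=> f' /= [<-|]; first by apply: In_nth.
    move/In_flatten => [s [/In_map [e [He ->]] Hf']].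
    by have [_ _ H3 _ _] := Hch2 e He; apply: H3.
  + move=> xi /In_npaths_Work [e [He [p [Hp ->]]]] /=.
    have [_ _ _ H4 _] := Hch2 e He; have [Hs Hl] := H4 p Hp.
    split; first by rewrite ltnS.
    by move=> fd [<-|/Hl].
  + split.
    - move=> r Hr.
      have Hw : col j r \in vals by rewrite mem_undup; apply: map_f.
      have : List.In (col j r) (map fst ch) by rewrite Hch1; apply/In_mem.
      move/In_map => [e [He Ee]].
      have [_ _ _ _ [H5 _]] := Hch2 e He.
      have Hrw : r \in Rw e.1 by rewrite mem_filter -Ee eqxx Hr.
      have [p [Hp Hcp]] := H5 r Hrw.
      exists ((f, e.1) :: p.1, p.2); split.
      + by apply/In_npaths_Work; exists e; split=> //; exists p.
      + move=> fd /= [<-|/Hcp] //=. rewrite -Ee. exact: has_val_col (HR r Hr) Hjm.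
    - move=> xi r /In_npaths_Work [e [He [p [Hp ->]]]] Hr Hcons /=.
      have [_ _ _ _ [_ H6]] := Hch2 e He.
      apply: H6 => //.
      + rewrite mem_filter Hr andbT.
        have E := wf_lab (HR r Hr) (Hcons (f, e.1) (or_introl erefl)) (has_val_col (HR r Hr) Hjm).
        by rewrite /= -E eqxx.
      + by move=> fd Hfd; apply: Hcons; right.
Qed.

Definition selector s := forall R : seq row, {subset R <= trows T} -> uniq R -> 1 < size R ->
  exists S, size S <= s /\ (forall j, j \in S -> j < m /\ LQ (nth f0 (tattr T) j)) /\
    forall t, t \in R -> size (Aset R S t) <= maxn 1 (size R %/ 2).

Lemma build_good s (HS : selector s) n : forall R : seq row, {subset R <= trows T} -> uniq R ->
  size R <= 2 ^ n -> exists v, goodnode R v (n * s).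
Proof.
elim: n => [|n IH] R HR Hu Hsz.
- have [v Hv] := leaf_good HR Hsz; exists v; exact: goodnode_mono Hv.
- case: (leqP (size R) 1) => H1.
    by have [v Hv] := leaf_good HR H1; exists v; exact: goodnode_mono Hv.
  have [S [HSs [HSj HSh]]] := HS R HR Hu H1.
  have [v Hv] : exists v, goodnode R v (size S + n * s).
    apply: round_good => //.
    + by case: R {HR Hu Hsz HSh} H1.
    + move=> t Ht; apply: IH.
      * by move=> r; rewrite mem_filter => /andP [_ /HR].
      * exact: filter_uniq.
      * apply: leq_trans (HSh t Ht) _; rewrite geq_max expn_gt0 /=.
        apply: leq_trans (leq_div2r 2 Hsz) _; by rewrite expnS mulKn.
  exists v; apply: goodnode_mono Hv; rewrite mulSn leq_add2r //.
Qed.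

Lemma good_tree v B : goodnode (trows T) v B ->
  is_dt k T [:: v] /\ forall xi, List.In xi (paths [:: v]) ->
     size xi.1 <= B /\ forall fd, List.In fd xi.1 -> LQ fd.1.
Proof.
move=> [H1 H2 H3 H4 [H5 H6]].
have Ep : paths [:: v] = npaths v by rewrite /paths /= cats0.
split; last by rewrite Ep.
split; first by rewrite /det_tree /= H2.
rewrite /is_ndt Ep.
split; first by rewrite /wf_tree /= H1.
split; first by move=> f; rewrite /tree_attrs /= cats0; apply: H3.
split.
- move=> r; split; first by move=> [xi [_ [Hr _]]].
  by move=> /[dup] Hr /H5 [xi [Hxi Hc]]; exists xi; split=> //; split.
- by move=> r xi Hr Hxi [_ Hc]; apply: H6.
Qed.

End Builder.

Local Open Scope fset_scope.

Lemma dedup_aux_sub seen (s : seq row) y : y \in dedup_aux seen s -> y \in s.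
Proof.
elim: s seen => [|x s IH] seen //=.
case: ifP => _.
- by move/IH; rewrite in_cons orbC => ->.
- by rewrite !in_cons => /orP [->|/IH ->] //; rewrite orbT.
Qed.

Lemma dedup_aux_has seen (s : seq row) y : y \in s -> y.1 \notin seen ->
  exists y', y' \in dedup_aux seen s /\ y'.1 = y.1.
Proof.
elim: s seen => [|x s IH] seen //=.
rewrite in_cons => /orP [/eqP ->|Hy] Hn.
- by rewrite (negbTE Hn); exists x; rewrite mem_head.
- case: ifP => Hx; first exact: IH.
  case: (eqVneq y.1 x.1) => [E|Ne]; first by exists x; rewrite mem_head E.
  have Hn' : y.1 \notin x.1 :: seen by rewrite in_cons negb_or Ne.
  have [y' [H1 H2]] := IH _ Hy Hn'; exists y'; split=> //; by rewrite in_cons H1 orbT.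
Qed.

Lemma op_reach_trans (F : Type) (T1 T2 T3 : table F) :
  op_reach T1 T2 -> op_reach T2 T3 -> op_reach T1 T3.
Proof. elim=> [//|A B D H1 H2 IH] H3; apply: reach_step H1 _; exact: IH. Qed.

Lemma size_rem_at (A : Type) i (s : seq A) : i < size s -> size (rem_at i s) = (size s).-1.
Proof. move=> H; rewrite /rem_at size_cat size_take size_drop H; lia. Qed.

Lemma rem_at_split (A : Type) (x0 : A) i (s : seq A) : i < size s ->
  s = take i s ++ nth x0 s i :: drop i.+1 s.
Proof. by move=> H; rewrite -drop_nth // cat_take_drop. Qed.

Lemma mask_rem_at (A : Type) (msk : bitseq) (x : seq A) i :
  size msk = size x -> i < size x -> nth false msk i = false ->
  mask msk x = mask (rem_at i msk) (rem_at i x).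
Proof.
move=> Hs Hi Hn.
case: x Hs Hi => [|a x] Hs Hi //.
rewrite {1}(rem_at_split a Hi) {1}(rem_at_split false (i:=i) (s:=msk)) ?Hs //.
rewrite mask_cat; last by rewrite !size_take Hs.
by rewrite Hn /= -mask_cat // !size_take Hs.
Qed.

Lemma mem_rem_at (A : eqType) (x0 : A) i (s : seq A) x : i < size s -> x \in s ->
  x \in rem_at i s \/ x = nth x0 s i.
Proof.
move=> Hi; rewrite {1}(rem_at_split x0 Hi) mem_cat in_cons.
case/orP=> [H|/orP [/eqP->|H]]; [left|by right|left]; by rewrite /rem_at mem_cat H ?orbT.
Qed.

Lemma count_rem_at (A : Type) (a : pred A) i (s : seq A) (x0 : A) : i < size s ->
  count a s = (count a (rem_at i s) + a (nth x0 s i))%N.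
Proof.
move=> Hi; rewrite {1}(rem_at_split x0 Hi) /rem_at !count_cat /=; lia.
Qed.

Lemma mask_all_true (A : Type) (msk : bitseq) (x : seq A) :
  count negb msk = 0 -> size msk = size x -> mask msk x = x.
Proof.
elim: msk x => [|b msk IH] [|a x] //= H [Hs].
by case: b H => //= H; rewrite IH.
Qed.

Section Proj.
Variable F : Type.

Lemma proj_reach n : forall (T : table F) (msk : bitseq), count negb msk = n ->
  size msk = size (tattr T) -> (forall r, r \in trows T -> size r.1 = size (tattr T)) ->
  true \in msk ->
  exists T', [/\ op_reach T T', tattr T' = mask msk (tattr T),
    (forall r', r' \in trows T' -> exists r, r \in trows T /\ r'.1 = mask msk r.1) &
    (forall r, r \in trows T -> exists r', r' \in trows T' /\ r'.1 = mask msk r.1)].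
Proof.
elim: n => [|n IH] T msk Hc Hs Hr Ht.
- exists T; split; first exact: reach_refl.
  + by rewrite mask_all_true.
  + by move=> r' Hr'; exists r'; split=> //; rewrite mask_all_true // Hr.
  + by move=> r Hr'; exists r; split=> //; rewrite mask_all_true // Hr.
- have Hhas : has negb msk by rewrite has_count Hc.
  pose i := find negb msk.
  have Hi : i < size msk by rewrite -has_find.
  have Hni : nth false msk i = false by apply/negbTE; exact: (nth_find false Hhas).
  have Hsz : 1 < size (tattr T).
    rewrite -Hs -(count_predC negb) Hc /=.
    have : 0 < count id msk by rewrite -has_count; apply/hasP; exists true.
    have -> : count (predC negb) msk = count id msk by apply: eq_count => b; case: b.
    lia.
  pose T1 := Table (rem_at i (tattr T))
                   (dedup_rows [seq (rem_at i r.1, r.2) | r <- trows T]).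
  have Hstep : op_step T T1 by apply: op_remove => //; rewrite -Hs.
  have Hr1 : forall r, r \in trows T1 -> size r.1 = size (tattr T1).
    move=> r /dedup_aux_sub /mapP [r0 Hr0 ->] /=.
    by rewrite !size_rem_at ?Hr // -Hs.
  have Ht1 : true \in rem_at i msk.
    by case: (mem_rem_at false Hi Ht) => // E; rewrite -E in Hni.
  have Hc1 : count negb (rem_at i msk) = n.
    by move: Hc; rewrite (count_rem_at negb false Hi) Hni /= addn1 => [[]].
  have Hs1 : size (rem_at i msk) = size (tattr T1) by rewrite /= !size_rem_at // -Hs.
  have [T' [H1 H2 H3 H4]] := IH T1 _ Hc1 Hs1 Hr1 Ht1.
  have Em : forall (A : Type) (x : seq A), size x = size (tattr T) -> mask msk x = mask (rem_at i msk) (rem_at i x).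
    by move=> A x Hx; apply: mask_rem_at => //; rewrite ?Hx -?Hs.
  exists T'; split.
  + exact: reach_step Hstep H1.
  + by rewrite H2 Em.
  + move=> r' /H3 [r1 [/dedup_aux_sub /mapP [r Hr0 ->] ->]].
    by exists r; split=> //=; rewrite Em // Hr.
  + move=> r Hr0.
    have Hin : (rem_at i r.1, r.2) \in [seq (rem_at i r.1, r.2) | r <- trows T] by apply: map_f.
    have [r1 [Hr1' E1]] := dedup_aux_has (seen := [::]) Hin isT.
    have [r' [Hr' E']] := H4 r1 Hr1'.
    by exists r'; split=> //; rewrite E' E1 /= Em // Hr.
Qed.

Lemma change_table (T : table F) :
  let X := map fst (trows T) in
  let T'' := Table (tattr T) (zip X [seq [fset i] | i <- iota 0 (size (trows T))]) in
  [/\ op_step T T'',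
     (forall r, r \in trows T'' -> exists i, r = (nth [::] X i, [fset i])) &
     (forall x, x \in X -> exists i, (x, [fset i]) \in trows T'')].
Proof.
move=> X T''.
have HsX : size X = size (trows T) by rewrite size_map.
split.
- apply: op_change; first by rewrite size_map size_iota.
  apply/allP => D /mapP [i _ ->]; apply/fset0Pn; exists i; exact: fset11.
- move=> r /(nthP (([::] : seq nat), fset0)) [i Hi <-].
  have Hi' : i < size (trows T) by move: Hi; rewrite /= size_zip size_map size_iota HsX minnn.
  exists i; rewrite /= nth_zip ?size_map ?size_iota // (nth_map 0) ?size_iota // nth_iota //.
- move=> x Hx; exists (index x X).
  have Hi : index x X < size X by rewrite index_mem.
  have -> : (x, [fset index x X]) = nth (([::] : seq nat), fset0) (trows T'') (index x X).
    rewrite /= nth_zip ?size_map ?size_iota // nth_index // (nth_map 0) ?size_iota -?HsX // nth_iota //.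
  by apply: mem_nth; rewrite /= size_zip size_map size_iota HsX minnn -HsX.
Qed.

End Proj.

Local Open Scope fset_scope.

Lemma In_split' (A : Type) (x : A) (s : seq A) : List.In x s -> exists s1 s2, s = s1 ++ x :: s2.
Proof.
elim: s => [|a s IH] //= [->|/IH [s1 [s2 ->]]]; first by exists [::], s.
by exists (a :: s1), s2.
Qed.

Lemma In_nth_ex (A : Type) (x0 x : A) (s : seq A) : List.In x s -> exists2 p, p < size s & nth x0 s p = x.
Proof.
elim: s => [|a s IH] //= [->|/IH [p Hp Ep]]; first by exists 0.
by exists p.+1.
Qed.

Section Psi.
Variables (F : Type) (psi : seq F -> nat).
Hypothesis Hlim : limited psi.

Lemma psi_sub1 f w : List.In f w -> psi [:: f] <= psi w.
Proof.
move=> Hf; case: Hlim => _ [Hmono _]; case: (In_split' Hf) => [s1 [s2 ->]].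
have H1 := Hmono (s1 ++ [:: f]) s2 [::].
have H2 := Hmono [::] s1 [:: f].
rewrite cats0 -catA /= in H1; rewrite /= in H2.
by rewrite cats0 in H1; exact: leq_trans H2 H1.
Qed.

Lemma psi_nil w : psi [::] <= psi w.
Proof. by case: Hlim => _ [Hmono _]; have := Hmono [::] w [::]; rewrite /= cats0. Qed.

Lemma psi_light c w : (forall f, List.In f w -> psi [:: f] <= c) -> psi w <= c * size w + psi [::].
Proof.
case: Hlim => Hsub _.
elim: w => [|f w IH] H /=; first by rewrite muln0.
have := Hsub [:: f] w; rewrite /= => Hs.
apply: leq_trans Hs _; rewrite mulnS -addnA leq_add //; first by apply: H; left.
by apply: IH => g Hg; apply: H; right.
Qed.

Lemma tree_cost_ge G xi : List.In xi (paths G) -> psi (map fst xi.1) <= tree_cost psi G.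
Proof. exact: (bigmax_In_ge (fun xi : seq (F * nat) * nat => psi (map fst xi.1))). Qed.

End Psi.

Section Key.
Variables (F : Type) (f0 : F) (k : nat) (C : table F -> Prop) (psi : seq F -> nat) (c : nat).
Hypothesis HCC : closed_class k C.
Hypothesis Hlim : limited psi.
Hypothesis HC : forall T, C T -> exists G, is_ndt k T G /\ tree_cost psi G <= c.

Lemma key_proj (T : table F) (S : seq nat) (u : row) : C T -> uniq S -> S != [::] ->
  (forall j, j \in S -> j < size (tattr T)) -> u \in trows T ->
  (forall j, j \in S -> exists y, [/\ y \in trows T, col j y != col j u &
       forall j', j' \in S -> j' != j -> col j' y = col j' u]) ->
  size S <= c /\ forall j, j \in S -> psi [:: nth f0 (tattr T) j] <= c.
Proof.
move=> CT HuS HSn HSm Hu Hy.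
have wfT : wf_table k T by case: HCC => H _; apply: H.
pose m := size (tattr T).
pose lab j := nth f0 (tattr T) j.
pose msk := [seq j \in S | j <- iota 0 m].
have Hmsk : size msk = m by rewrite size_map size_iota.
have Hnth : forall j, j < m -> nth false msk j = (j \in S).
  by move=> j Hj; rewrite (nth_map 0) ?size_iota // nth_iota.
have Htrue : true \in msk.
  have [j Hj] : exists j, j \in S by move: HSn; case: (S) => [|j S'] // _; exists j; rewrite mem_head.
  have Hjm := HSm j Hj.
  by rewrite -Hj -(Hnth j Hjm); apply: mem_nth; rewrite Hmsk.
have Hrs : forall r, r \in trows T -> size r.1 = size (tattr T) by move=> r /(wf_row wfT) [].
have [T' [R1 R2 R3 R4]] := proj_reach (erefl _) Hmsk Hrs Htrue.
have [Hst R5 R6] := change_table T'.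
set T'' := Table _ _ in Hst R5 R6.
have CT'' : C T''.
  case: HCC => _ Hcl; apply: (Hcl T) => //.
  exact: op_reach_trans R1 (reach_step Hst (reach_refl _)).
have [G [Hndt Hcost]] := HC CT''.
case: Hndt => _ [_ [Hcov Hsnd]].
have HV1 : forall r f d, r \in trows T -> has_val T'' (mask msk r.1) f d ->
    exists j, [/\ j \in S, j < m, f = lab j & d = col j r].
  move=> r f d Hr; rewrite /has_val /= R2 mask_zip' ?Hrs //.
  move/(In_mask (f0, 0)) => [j [Hj Hm Ee]].
  have Hjm : j < m by move: Hj; rewrite size_zip Hrs // minnn.
  exists j; split=> //; first by rewrite -Hnth.
  + by move: Ee; rewrite nth_zip ?Hrs // => [[]].
  + by move: Ee; rewrite nth_zip ?Hrs // => [[]].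
have HV2 : forall r j, r \in trows T -> j \in S -> has_val T'' (mask msk r.1) (lab j) (col j r).
  move=> r j Hr Hj; rewrite /has_val /= R2 mask_zip' ?Hrs //.
  have Hjm := HSm j Hj.
  have -> : (lab j, col j r) = nth (f0, 0) (zip (tattr T) r.1) j by rewrite nth_zip ?Hrs.
  by apply: mask_In; rewrite ?size_zip ?Hrs ?minnn ?Hnth.
have Hrow : forall r, r \in trows T -> exists i, (mask msk r.1, [fset i]) \in trows T''.
  move=> r Hr; have [r' [Hr' E]] := R4 r Hr.
  have : r'.1 \in map fst (trows T') by apply: map_f.
  by move/R6; rewrite E.
have Hidx : forall x i, (x, [fset i]) \in trows T'' -> x = nth [::] (map fst (trows T')) i.
  move=> x i /R5 [i' [-> E]]; have : i \in [fset i'] by rewrite -E fset11.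
  by rewrite in_fset1 => /eqP ->.
have [iu Hu''] := Hrow u Hu.
have [xi [Hxi [_ Hcu]]] : exists xi, List.In xi (paths G) /\ in_sub T'' xi.1 (mask msk u.1, [fset iu]).
  by apply/Hcov.
have Hxi2 : xi.2 = iu.
  by have := Hsnd _ xi Hu'' Hxi (conj Hu'' Hcu); rewrite in_fset1 => /eqP.
have Hlab_inj : forall j j2 y, j \in S -> j2 \in S -> y \in trows T -> col j y != col j u ->
    (forall j', j' \in S -> j' != j -> col j' y = col j' u) -> lab j = lab j2 -> j = j2.
  move=> j j2 y Hj Hj2 Hy0 Hne Hag El.
  case: (eqVneq j j2) => // Nj.
  have Nj' : j2 != j by rewrite eq_sym.
  have E1 := wf_lab wfT Hy0 (has_val_col f0 wfT Hy0 (HSm j Hj)) (eq_ind_r (fun f => has_val T y.1 f _) (has_val_col f0 wfT Hy0 (HSm j2 Hj2)) El).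
  have E2 := wf_lab wfT Hu (has_val_col f0 wfT Hu (HSm j Hj)) (eq_ind_r (fun f => has_val T u.1 f _) (has_val_col f0 wfT Hu (HSm j2 Hj2)) El).
  have E3 := Hag j2 Hj2 Nj'.
  by move: Hne; rewrite /col in E1 E2 E3 *; rewrite E1 E2 E3 eqxx.
have Honpath : forall j, j \in S -> List.In (lab j) (map fst xi.1).
  move=> j Hj; have [y [Hy0 Hne Hag]] := Hy j Hj.
  have [iy Hy''] := Hrow y Hy0.
  have Hnc : ~ (forall fd, List.In fd xi.1 -> has_val T'' (mask msk y.1) fd.1 fd.2).
    move=> Hall.
    have := Hsnd _ xi Hy'' Hxi (conj Hy'' Hall); rewrite Hxi2 in_fset1 => /eqP Eiu.
    have Emask : mask msk y.1 = mask msk u.1 by rewrite (Hidx _ _ Hy'') (Hidx _ _ Hu'') Eiu.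
    have := HV2 u j Hu Hj; rewrite -Emask => /(HV1 _ _ _ Hy0) [j2 [Hj2 _ El Ec]].
    have Ejj := Hlab_inj j j2 y Hj Hj2 Hy0 Hne Hag El.
    by move: Hne; rewrite Ec Ejj eqxx.
  have [fd [Hfd Hnv]] : exists fd, List.In fd xi.1 /\ ~ has_val T'' (mask msk y.1) fd.1 fd.2.
    apply: NNPP => Hn; apply: Hnc => fd Hfd; apply: NNPP => Hnv; apply: Hn; by exists fd.
  have [j' [Hj' _ Ef Ed]] := HV1 u fd.1 fd.2 Hu (Hcu fd Hfd).
  case: (eqVneq j' j) => [Ej|Nj].
  + by apply/In_map; exists fd; split=> //; rewrite -Ej.
  + exfalso; apply: Hnv; rewrite Ef Ed -(Hag j' Hj' Nj); exact: HV2.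
have Hw : psi (map fst xi.1) <= c := leq_trans (tree_cost_ge psi Hxi) Hcost.
split.
- have Hsz : size S <= size (iota 0 (size (map fst xi.1))).
    apply: (count_inj (P := fun j p => nth f0 (map fst xi.1) p = lab j)) => //.
    + move=> j Hj; have [p Hp Ep] := In_nth_ex f0 (Honpath j Hj).
      by exists p; rewrite mem_iota add0n Hp.
    + move=> j j2 p Hj Hj2 E1 E2.
      have [y [Hy0 Hne Hag]] := Hy j Hj.
      apply: (Hlab_inj j j2 y) => //; by rewrite -E1 -E2.
  rewrite size_iota in Hsz; apply: leq_trans Hsz _.
  by case: Hlim => _ [_ Hge]; apply: leq_trans (Hge _) Hw.
- move=> j Hj; apply: leq_trans Hw.
  exact: psi_sub1 (Honpath j Hj).
Qed.

End Key.

Local Open Scope fset_scope.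

Lemma min_nat (P : nat -> Prop) : (exists n, P n) -> exists n, P n /\ forall n', P n' -> n <= n'.
Proof.
move=> [n Hn]; apply: NNPP => Hno.
suff : forall x y, y <= x -> ~ P y by move/(_ n n (leqnn n)).
elim=> [|x IH] y Hy Py.
- apply: Hno; exists y; split=> // n'; rewrite leqn0 in Hy; by rewrite (eqP Hy).
- apply: Hno; exists y; split=> // n' Pn'; apply: NNPP => /negP; rewrite -ltnNge => Hlt.
  by apply: (IH n') => //; rewrite -ltnS; apply: leq_trans Hlt Hy.
Qed.

Lemma uniq_map_inj (A B : eqType) (f : A -> B) s x y :
  uniq (map f s) -> x \in s -> y \in s -> f x = f y -> x = y.
Proof.
elim: s => [|a s IH] //= /andP [Ha Hu]; rewrite !in_cons.
case/orP=> [/eqP->|Hx]; case/orP=> [/eqP->|Hy] // E.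
- by move: Ha; rewrite E map_f.
- by move: Ha; rewrite -E map_f.
- exact: IH.
Qed.

Lemma size_le1 (A : eqType) (s : seq A) : uniq s -> (forall x y, x \in s -> y \in s -> x = y) -> size s <= 1.
Proof.
case: s => [|a [|b s]] //= /andP [Ha _] H.
have E : a = b by apply: H; rewrite !inE eqxx ?orbT.
by move: Ha; rewrite E in_cons eqxx.
Qed.

Lemma uniq_rem_at (A : eqType) i (s : seq A) : uniq s -> uniq (rem_at i s).
Proof.
case: (ltnP i (size s)) => Hi.
- case: s Hi => [|a s] Hi //; rewrite {1}(rem_at_split a Hi) /rem_at !cat_uniq /= => /and3P [H1 /norP [_ H2] /andP [_ H3]].
  by rewrite H1 H2 H3.
- by rewrite /rem_at take_oversize // drop_oversize ?cats0 // ltnW.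
Qed.

Lemma argmax_seq (l : seq nat) (g : nat -> nat) : l != [::] -> exists2 x, x \in l & forall y, y \in l -> g y <= g x.
Proof.
elim: l => [|a l IH] // _.
case: (eqVneq l [::]) => [->|Hn].
- by exists a; rewrite ?mem_head // => y; rewrite inE => /eqP ->.
- have [x Hx Hmax] := IH Hn.
  case: (leqP (g a) (g x)) => Hax.
  + exists x; first by rewrite in_cons Hx orbT.
    by move=> y; rewrite in_cons => /orP [/eqP ->|/Hmax].
  + exists a; first by rewrite mem_head.
    move=> y; rewrite in_cons => /orP [/eqP ->//|/Hmax Hy]; apply: leq_trans Hy (ltnW Hax).
Qed.

Definition agz (z : nat -> nat) (S : seq nat) (r : row) := all (fun j => col j r == z j) S.

Section Sel.
Variables (F : Type) (f0 : F) (k : nat) (C : table F -> Prop) (psi : seq F -> nat) (c : nat).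
Hypothesis HCC : closed_class k C.
Hypothesis Hlim : limited psi.
Hypothesis HC : forall T, C T -> exists G, is_ndt k T G /\ tree_cost psi G <= c.
Variable T : table F.
Hypothesis CT : C T.
Local Notation m := (size (tattr T)).
Local Notation lab j := (nth f0 (tattr T) j).

Lemma wfT : wf_table k T.
Proof. by case: HCC => H _; apply: H. Qed.

Lemma rows_inj r r' : r \in trows T -> r' \in trows T -> r.1 = r'.1 -> r = r'.
Proof. by case: wfT => _ [Hu _]; apply: uniq_map_inj. Qed.

Lemma rows_uniq : uniq (trows T).
Proof. by case: wfT => _ [Hu _]; move: Hu; apply: map_uniq. Qed.

Lemma sel_min (R : seq row) (z : nat -> nat) :
  {subset R <= trows T} -> uniq R -> 1 < size R ->
  (forall j, j < m -> exists2 r, r \in R & col j r = z j) ->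
  exists S : seq nat, [/\ forall j, j \in S -> j < m /\ psi [:: lab j] <= c,
    size S <= c.+1 & size [seq r <- R | agz z S r] <= 1].
Proof.
move=> HR HuR H2 Hz.
pose P n := exists S : seq nat, [/\ size S = n, forall j, j \in S -> j < m &
                                    size [seq r <- R | agz z S r] <= 1].
have Pm : P m.
  exists (iota 0 m); split; first by rewrite size_iota.
  - by move=> j; rewrite mem_iota.
  - apply: size_le1; first exact: filter_uniq.
    move=> x y; rewrite !mem_filter => /andP [Hx HxR] /andP [Hy HyR].
    apply: rows_inj; try exact: HR.
    have [Hsx _ _] := wf_row wfT (HR _ HxR); have [Hsy _ _] := wf_row wfT (HR _ HyR).
    apply: (eq_from_nth (x0 := 0)); first by rewrite Hsx Hsy.
    move=> i Hi; rewrite Hsx in Hi.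
    have Hi' : i \in iota 0 m by rewrite mem_iota.
    by have := eqP (allP Hx i Hi'); have := eqP (allP Hy i Hi'); rewrite /col => -> ->.
have [n0 [[S0 [HS0s HS0m HS0f]] Hmin]] := min_nat (ex_intro _ _ Pm).
have Hn0 : 0 < n0.
  rewrite lt0n; apply/negP => /eqP E; move: HS0s; rewrite E => /size0nil E0.
  move: HS0f; rewrite E0 (eq_filter (a2 := predT)) ?filter_predT //.
  by move=> Hle; move: (leq_trans H2 Hle).
have Hdrop : forall p, p < n0 -> 1 < size [seq r <- R | agz z (rem_at p S0) r].
  move=> p Hp; rewrite ltnNge; apply/negP => Hle.
  have : n0 <= n0.-1.
    apply: Hmin; exists (rem_at p S0); split=> //.
    + by rewrite size_rem_at ?HS0s.
    + by move=> j Hj; apply: HS0m; move: Hj; rewrite /rem_at mem_cat => /orP [/mem_take|/mem_drop].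
  move=> H; lia.
have HuS0 : uniq S0.
  apply: negbNE; apply/negP => /(uniqPn 0) [i [j [Hij Hj Eij]]].
  have Hsame : forall r, agz z (rem_at j S0) r = agz z S0 r.
    move=> r; apply: eq_all_r => x; apply/idP/idP.
    + by rewrite /rem_at mem_cat => /orP [/mem_take|/mem_drop].
    + move=> Hx; case: (mem_rem_at 0 Hj Hx) => // ->; rewrite -Eij /rem_at mem_cat.
      by apply/orP; left; rewrite -(nth_take 0 Hij); apply: mem_nth; rewrite size_take Hj.
  have := Hdrop j; rewrite -HS0s => /(_ Hj).
  by rewrite (eq_filter Hsame) ltnNge HS0f.
have Hwit : forall j, j \in S0 -> exists2 y, y \in R &
    col j y != z j /\ forall j', j' \in S0 -> j' != j -> col j' y = z j'.
  move=> j Hj.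
  pose p := index j S0.
  have Hp : p < size S0 by rewrite index_mem.
  have Hnp : nth 0 S0 p = j by rewrite nth_index.
  have := Hdrop p; rewrite -HS0s => /(_ Hp) H1.
  have [y Hy Hny] : exists2 y, y \in [seq r <- R | agz z (rem_at p S0) r] & ~~ agz z S0 y.
    apply/hasP; rewrite -(negbK (has _ _)) has_predC; apply/negP => /negPn Hall.
    have : size [seq r <- R | agz z (rem_at p S0) r] <= size [seq r <- R | agz z S0 r].
      apply: uniq_leq_size; first exact: filter_uniq.
      move=> x Hx; rewrite mem_filter (allP Hall x Hx) /=.
      by move: Hx; rewrite mem_filter => /andP [].
    move=> Hle; have := leq_trans H1 (leq_trans Hle HS0f); by []. 
  move: Hy; rewrite mem_filter => /andP [Hay HyR].
  exists y => //.
  have Hag : forall j', j' \in S0 -> j' != j -> col j' y = z j'.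
    move=> j' Hj' Nj; case: (mem_rem_at 0 Hp Hj') => [Hin|E]; last by move: Nj; rewrite E Hnp eqxx.
    exact: (eqP (allP Hay j' Hin)).
  split=> //.
  move: Hny => /allPn [j2 Hj2 Hn2].
  case: (eqVneq j2 j) => [E|Nj]; first by rewrite -E.
  by move: Hn2; rewrite (Hag j2 Hj2 Nj) eqxx.
have HS0sub : forall p x, x \in rem_at p S0 -> x \in S0.
  by move=> p x; rewrite /rem_at mem_cat => /orP [/mem_take|/mem_drop].
have HSn : S0 != [::] by apply/eqP => E; move: Hn0; rewrite -HS0s E.
case: (boolP (has (agz z S0) R)) => [/hasP [u Hu0 Hau]|Hno].
-
  have Eu : forall j', j' \in S0 -> col j' u = z j' by move=> j' Hj'; exact: (eqP (allP Hau j' Hj')).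
  have Hy' : forall j, j \in S0 -> exists y, [/\ y \in trows T, col j y != col j u &
      forall j', j' \in S0 -> j' != j -> col j' y = col j' u].
    move=> j Hj; have [y Hy [Hne Hag]] := Hwit j Hj.
    exists y; split; [exact: HR | by rewrite Eu | by move=> j' Hj' Nj; rewrite Eu // Hag].
  have [Hsz Hl] := key_proj f0 HCC Hlim HC CT HuS0 HSn HS0m (HR _ Hu0) Hy'.
  exists S0; split=> //; last exact: leq_trans Hsz _.
  by move=> j Hj; split; [exact: HS0m | exact: Hl].
- have Hn1 : 1 < n0.
    rewrite ltn_neqAle Hn0 andbT; apply/eqP => E.
    have [j Ej] : exists j, S0 = [:: j].
      by move: HS0s; rewrite -E; case: (S0) => [|j [|]] //; exists j.
    have Hj0 : j \in S0 by rewrite Ej mem_head.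
    have [r Hr Er] := Hz j (HS0m j Hj0).
    by move/hasP: Hno; apply; exists r => //; rewrite /agz Ej /= Er eqxx.
  have Hsub : forall p, p < n0 -> size (rem_at p S0) <= c /\
      (forall j, j \in rem_at p S0 -> psi [:: lab j] <= c).
    move=> p Hp; have Hp' : p < size S0 by rewrite HS0s.
    have [y0 Hy0 [Hne0 Hag0]] := Hwit (nth 0 S0 p) (mem_nth 0 Hp').
    have Hnot : nth 0 S0 p \notin rem_at p S0.
      move: HuS0; rewrite {1}(rem_at_split 0 Hp') cat_uniq /= => /and3P [_ /norP [G1 _] /andP [G2 _]].
      by rewrite /rem_at mem_cat negb_or G1 G2.
    have Hne : forall j, j \in rem_at p S0 -> j != nth 0 S0 p.
      by move=> j Hj; apply/eqP => E; move: Hnot; rewrite -E Hj.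
    have Hy' : forall j, j \in rem_at p S0 -> exists y, [/\ y \in trows T, col j y != col j y0 &
        forall j', j' \in rem_at p S0 -> j' != j -> col j' y = col j' y0].
      move=> j Hj; have [y Hy [Hne1 Hag]] := Hwit j (HS0sub _ _ Hj).
      exists y; split; first exact: HR.
      + by rewrite (Hag0 j (HS0sub _ _ Hj) (Hne j Hj)).
      + move=> j' Hj' Nj.
        by rewrite (Hag j' (HS0sub _ _ Hj') Nj) (Hag0 j' (HS0sub _ _ Hj') (Hne j' Hj')).
    have HSn' : rem_at p S0 != [::].
      by rewrite -size_eq0 size_rem_at // HS0s; case: (n0) Hn1 => [|[|]].
    have HS0m' : forall j, j \in rem_at p S0 -> j < m by move=> j Hj; apply: HS0m (HS0sub _ _ Hj).
    have := key_proj f0 HCC Hlim HC CT (uniq_rem_at p HuS0) HSn' HS0m' (HR _ Hy0) Hy'; by [].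
  exists S0; split=> //.
  + move=> j Hj; split; first exact: HS0m.
    pose p := if index j S0 == 0 then 1 else 0.
    have Hp : p < n0 by rewrite /p; case: ifP => _ //.
    have Hp' : p < size S0 by rewrite HS0s.
    apply: (proj2 (Hsub p Hp)).
    case: (mem_rem_at 0 Hp' Hj) => // E.
    have : index j S0 = p by rewrite E index_uniq.
    rewrite /p; case: (eqVneq (index j S0) 0) => [->|Hn] // E0; by rewrite E0 in Hn.
  + have [Hs _] := Hsub 0 Hn0.
    by move: Hs; rewrite size_rem_at ?HS0s // => Hs; lia.
Qed.

End Sel.

Local Open Scope fset_scope.

Fixpoint words (A : seq (nat * nat)) n : seq (seq (nat * nat)) :=
  match n with
  | 0 => [:: [::]]
  | n'.+1 => [::] :: [seq a :: w | a <- A, w <- words A n']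
  end.

Lemma words_mem A n w : size w <= n -> all (mem A) w -> w \in words A n.
Proof.
elim: n w => [|n IH] [|a w] //=; rewrite ?inE ?eqxx //.
move=> Hs /andP [Ha Hw]; apply/orP; right.
by apply: allpairs_f => //; apply: IH.
Qed.

Lemma size_words A n : size (words A n) <= (size A).+1 ^ n.
Proof.
elim: n => [|n IH] //=.
rewrite size_allpairs expnS mulSn.
have H0 : 0 < (size A).+1 ^ n by rewrite expn_gt0.
have H1 : size A * size (words A n) <= size A * (size A).+1 ^ n by apply: leq_mul.
lia.
Qed.

Lemma size_le1_eq (A : eqType) (s : seq A) x y : size s <= 1 -> x \in s -> y \in s -> x = y.
Proof. by case: s => [|a [|b s]] //= _; rewrite !inE => /eqP -> /eqP ->. Qed.

Section Uncond.
Variables (F : Type) (f0 : F) (k : nat) (T : table F).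
Hypothesis wfT : wf_table k T.
Local Notation m := (size (tattr T)).

Lemma rows_inj' r r' : r \in trows T -> r' \in trows T -> r.1 = r'.1 -> r = r'.
Proof. by case: wfT => _ [Hu _]; apply: uniq_map_inj. Qed.

Lemma rows_uniq' : uniq (trows T).
Proof. by case: wfT => _ [Hu _]; move: Hu; apply: map_uniq. Qed.

Lemma selector_all : selector f0 T (fun _ => True) m.
Proof.
move=> R HR Hu H2; exists (iota 0 m); split; first by rewrite size_iota.
split; first by move=> j; rewrite mem_iota.
move=> t Ht; apply: leq_trans (leq_maxl _ _); apply: size_le1; first exact: filter_uniq.
have Hall : forall r, r \in Aset R (iota 0 m) t -> r = t.
  move=> r; rewrite mem_filter => /andP [Ha Hr].
  apply: rows_inj'; [exact: HR | exact: HR |].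
  have [Hsr _ _] := wf_row wfT (HR _ Hr); have [Hst _ _] := wf_row wfT (HR _ Ht).
  apply: (eq_from_nth (x0 := 0)); first by rewrite Hsr Hst.
  move=> i Hi; rewrite Hsr in Hi.
  have Hi' : i \in iota 0 m by rewrite mem_iota.
  by have := eqP (allP Ha i Hi'); rewrite /col.
by move=> x y /Hall -> /Hall ->.
Qed.

Lemma det_tree_exists : exists G, is_dt k T G.
Proof.
have [v Hv] := build_good wfT (selector_all) (n := size (trows T)) (fun r H => H) rows_uniq'
  (ltnW (ltn_expl (m:=2) _ isT)).
by have [H _] := good_tree Hv; exists [:: v].
Qed.

End Uncond.

Section Light.
Variables (F : Type) (f0 : F) (k : nat) (C : table F -> Prop) (psi : seq F -> nat) (c : nat).
Hypothesis HCC : closed_class k C.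
Hypothesis Hlim : limited psi.
Hypothesis HC : forall T, C T -> exists G, is_ndt k T G /\ tree_cost psi G <= c.
Variable T : table F.
Hypothesis CT : C T.
Local Notation m := (size (tattr T)).

Lemma plur (R : seq row) : R != [::] -> exists z : nat -> nat, forall j,
  (exists2 r, r \in R & col j r = z j) /\
  forall w, count (fun r => col j r == w) R <= count (fun r => col j r == z j) R.
Proof.
move=> Rn.
have H : forall j, exists v, (exists2 r, r \in R & col j r = v) /\
    forall w, count (fun r => col j r == w) R <= count (fun r => col j r == v) R.
  move=> j.
  have Hn : map (col j) R != [::] by move: Rn; case: (R).
  have [x /mapP [r Hr Ex] Hmax] := argmax_seq (fun w => count (fun r => col j r == w) R) Hn.
  exists x; split; first by exists r.
  move=> w; case: (boolP (w \in map (col j) R)) => [/Hmax //|Hw].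
  suff -> : count (fun r => col j r == w) R = 0 by [].
  apply/eqP; rewrite -leqn0 leqNgt -has_count; apply/hasP => [[r0 Hr0 /eqP E]].
  by move: Hw; rewrite -E map_f.
exists (fun j => proj1_sig (constructive_indefinite_description _ (H j))).
move=> j; exact: proj2_sig (constructive_indefinite_description _ (H j)).
Qed.

Lemma selector_light : selector f0 T (fun f => psi [:: f] <= c) c.+1.
Proof.
move=> R HR Hu H2.
have Rn : R != [::] by move: H2; case: (R).
have [z Hz] := plur Rn.
have [S [Hl Hs Hf]] := sel_min f0 HCC Hlim HC CT HR Hu H2 (fun j _ => proj1 (Hz j)).
exists S; split=> //; split=> // t Ht.
case: (boolP (agz z S t)) => Hat.
- apply: leq_trans (leq_maxl _ _); apply: leq_trans Hf.
  apply: uniq_leq_size; first exact: filter_uniq.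
  move=> r; rewrite !mem_filter => /andP [Ha ->]; rewrite andbT.
  apply/allP => j Hj; rewrite (eqP (allP Ha j Hj)); exact: (allP Hat j Hj).
- move/allPn: Hat => [j Hj Hne].
  pose w := col j t.
  apply: leq_trans (leq_maxr _ _).
  have H1 : size (Aset R S t) <= count (fun r => col j r == w) R.
    rewrite -size_filter; apply: uniq_leq_size; first exact: filter_uniq.
    move=> r; rewrite !mem_filter => /andP [Ha ->]; rewrite andbT; exact: (allP Ha j Hj).
  apply: leq_trans H1 _.
  have H3 : count (fun r => col j r == w) R + count (fun r => col j r == z j) R <= size R.
    rewrite -count_predUI.
    have -> : count (predI (fun r => col j r == w) (fun r => col j r == z j)) R = 0.
      apply/eqP; rewrite -leqn0 leqNgt -has_count; apply/hasP => [[r0 _ /andP [/eqP E1 /eqP E2]]].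
      by move: Hne; rewrite -/w -E1 E2 eqxx.
    rewrite addn0; exact: count_size.
  have H4 := proj2 (Hz j) w.
  rewrite leq_divRL //; lia.
Qed.

Definition alpha_m := [seq (j, v) | j <- iota 0 m, v <- iota 0 k].

Lemma rows_count : size (trows T) <= (m * k).+1 ^ c.+1.
Proof.
have wfT := wfT HCC CT.
case: (leqP (size (trows T)) 1) => H2.
  by apply: leq_trans H2 _; rewrite expn_gt0.
have Hsz : size (words alpha_m c.+1) <= (m * k).+1 ^ c.+1.
  by apply: leq_trans (size_words _ _) _; rewrite size_allpairs !size_iota.
apply: leq_trans Hsz.
pose P (r : row) (w : seq (nat * nat)) := exists S : seq nat,
  w = [seq (j, col j r) | j <- S] /\
  (forall r', r' \in trows T -> agz (fun j => col j r) S r' -> r' = r).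
apply: (count_inj (P := P)); first exact: (rows_uniq' wfT).
- move=> r Hr.
  have [S [Hl Hs Hf]] := sel_min f0 HCC Hlim HC CT (R := trows T) (z := fun j => col j r)
     (fun x H => H) (rows_uniq' wfT) H2 (fun j _ => ex_intro2 _ _ r Hr erefl).
  exists [seq (j, col j r) | j <- S]; split.
  + apply: words_mem; first by rewrite size_map.
    apply/allP => x /mapP [j Hj ->].
    have [Hjm _] := Hl j Hj; have [Hsr Hk _] := wf_row wfT Hr.
    apply: allpairs_f; rewrite mem_iota //= add0n //.
    by apply: (allP Hk); apply: mem_nth; rewrite Hsr.
  + exists S; split=> // r' Hr' Ha.
    apply: (size_le1_eq Hf); rewrite mem_filter ?Ha ?Hr' //.
    by rewrite Hr andbT; apply/allP => j _.
- move=> r r' w Hr Hr' [S [E1 U1]] [S' [E2 U2]].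
  have ES : S = S'.
    have := congr1 (map fst) E2; rewrite E1 -!map_comp /=.
    by rewrite !(@eq_map _ _ _ id) ?map_id.
  subst S'.
  have Hc : {in S, (fun j => (j, col j r)) =1 (fun j => (j, col j r'))} by apply/eq_in_map; rewrite -E1 -E2.
  apply: esym; apply: U1 => //; apply/allP => j Hj.
  by have := Hc j Hj; case=> ->.
Qed.

Definition Gbound mm := (c * (c.+1 * (trunc_log 2 (mm * k).+1).+1 * c.+1) + psi [::])%N.

Lemma det_tree_light : exists G, is_dt k T G /\ tree_cost psi G <= Gbound m.
Proof.
have wfT := wfT HCC CT.
pose L := (trunc_log 2 (m * k).+1).+1.
have Hrows : size (trows T) <= 2 ^ (c.+1 * L).
  apply: leq_trans rows_count _.
  rewrite (mulnC c.+1 L) expnM leq_exp2r //.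
  exact: ltnW (trunc_log_ltn (p:=2) _ isT).
have [v Hv] := build_good wfT (selector_light) (fun r H => H) (rows_uniq' wfT) Hrows.
have [Hdt Hp] := good_tree Hv.
exists [:: v]; split=> //.
apply: bigmax_In_le => xi Hxi.
have [Hs Hl] := Hp xi Hxi.
apply: leq_trans (psi_light Hlim (c := c) _) _.
- by move=> f /In_map [fd [Hfd ->]]; apply: Hl.
- rewrite size_map leq_add2r /Gbound; exact: leq_mul.
Qed.

End Light.

Local Close Scope fset_scope.

Lemma lin_exp a b : exists t0, forall t, t0 <= t -> a * t + b < 2 ^ t.
Proof.
pose x := (2 * (a + b)).+1.
exists (2 * x).
have Hx : x < 2 ^ x by apply: ltn_expl.
have Hbase : a * (2 * x) + b < 2 ^ (2 * x).
  have H1 : x * x < 2 ^ x * 2 ^ x by apply: ltn_mul.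
  rewrite mul2n -addnn expnD; apply: leq_trans H1.
  rewrite /x; nia.
move=> t Ht; rewrite -(subnKC Ht).
elim: (t - 2 * x) => [|d IH]; first by rewrite addn0.
rewrite addnS expnS.
have Hpos : 0 < 2 * x + d by rewrite /x; lia.
nia.
Qed.

Lemma log_small D e k : 0 < k -> exists M, forall m, M <= m -> D * (trunc_log 2 (m * k).+1).+1 + e < m.
Proof.
move=> Hk.
have [t0 Ht0] := lin_exp (k * D) (k * (D + e)).+1.
exists (D * t0 + e).+1 => m Hm.
set t := trunc_log 2 (m * k).+1.
case: (ltnP t t0) => Ht.
- apply: leq_trans Hm; rewrite ltnS leq_add2r leq_mul2l Ht orbT //.
- have H1 := Ht0 t Ht.
  have H2 : 2 ^ t <= (m * k).+1 by apply: trunc_logP.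
  have H3 : k * (D * t.+1 + e) < k * m by nia.
  by rewrite ltn_mul2l in H3; case/andP: H3.
Qed.

Lemma inf_large (P : nat -> Prop) : ~ finite_nat P -> forall B, exists n, P n /\ B <= n.
Proof.
move=> Hinf B; apply: NNPP => Hno; apply: Hinf; exists (iota 0 B) => n Pn.
rewrite mem_iota add0n /=; apply: NNPP => /negP; rewrite -leqNgt => HB.
by apply: Hno; exists n.
Qed.

Lemma max_nat (Q : nat -> Prop) B : (exists x, Q x) -> (forall x, Q x -> x <= B) -> exists x, is_max Q x.
Proof.
move=> [x0 Qx0] HB.
have [y [Hy Hmin]] := min_nat (P := fun y => forall x, Q x -> x <= y) (ex_intro _ B HB).
exists y; split=> //.
apply: NNPP => NQ.
case: y Hy Hmin NQ => [|y] Hy Hmin NQ.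
- by have := Hy x0 Qx0; rewrite leqn0 => /eqP E; apply: NQ; rewrite -E.
- have : y.+1 <= y; last by rewrite ltnn.
  apply: Hmin => x Qx; have := Hy x Qx; rewrite leq_eqVlt => /orP [/eqP E|] //.
  by exfalso; apply: NQ; rewrite -E.
Qed.

Lemma Gbound_mono F k (psi : seq F -> nat) c m1 m2 : m1 <= m2 -> Gbound k psi c m1 <= Gbound k psi c m2.
Proof.
move=> H; rewrite /Gbound leq_add2r leq_mul2l; apply/orP; right.
rewrite leq_mul2r; apply/orP; right; rewrite leq_mul2l; apply/orP; right.
by rewrite ltnS; apply: leq_trunc_log; rewrite ltnS leq_mul2r H orbT.
Qed.

Theorem lemma8 (k : nat) (F : Type) (C : table F -> Prop) (psi : seq F -> nat) :
  2 <= k -> inhabited F ->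
  closed_class k C -> limited psi ->
  typ_is (U_graph k C psi Ka Ki) TAlpha ->
  typ_is (U_graph k C psi Kd Ki) TAlpha \/ typ_is (U_graph k C psi Kd Ki) TBeta.
Proof.
move=> Hk [f0] HCC Hlim [HdomA [b Hb]].
have Hsize : forall T : table F, size (tattr T) <= psi (tattr T).
  by move=> T; case: Hlim => _ [_ H].
have wfC : forall T, C T -> wf_table k T by case: HCC.
have HC : forall T, C T -> exists G, is_ndt k T G /\ tree_cost psi G <= b.
  move=> T CT.
  have [G0 [_ HG0]] := det_tree_exists f0 (wfC T CT).
  have [x0 [[G [HG EG]] Hmin]] := min_nat (P := fun x => exists G, is_ndt k T G /\ tree_cost psi G = x)
     (ex_intro _ _ (ex_intro _ G0 (conj HG0 erefl))).
  exists G; split=> //; rewrite EG.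
  have [n [[mm Hmm] Hn]] := inf_large HdomA (psi (tattr T)).
  apply: leq_trans (Hb n mm Hmm).
  case: Hmm => _ Hmax; apply: Hmax.
  by exists T, (psi (tattr T)); split=> //; split; [split; [exists G|] |].
pose g := Gbound k psi b.
have Hdex : forall T, C T -> exists x, psi_kind k psi Kd T x.
  move=> T CT; have [G0 HG0] := det_tree_exists f0 (wfC T CT).
  have [x0 [Hx Hmin]] := min_nat (P := fun x => exists G, is_dt k T G /\ tree_cost psi G = x)
     (ex_intro _ _ (ex_intro _ G0 (conj HG0 erefl))).
  by exists x0; split.
have Hdle : forall T x, C T -> psi_kind k psi Kd T x -> x <= g (size (tattr T)).
  move=> T x CT [_ Hmin].
  have [G [HG Hc]] := det_tree_light f0 HCC Hlim HC CT.
  by apply: leq_trans (Hmin _ (ex_intro _ G (conj HG erefl))) Hc.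
have HDom : forall n, Dom (U_graph k C psi Ka Ki) n -> Dom (U_graph k C psi Kd Ki) n.
  move=> n [mm [[T0 [x' [CT0 [_ [Ex' Hx']]]]] _]].
  have [y Hy] := Hdex T0 CT0.
  apply: (max_nat (B := g n)).
  - by exists y, T0, x'; split=> //; split=> //.
  - move=> x1 [T [x2 [CT [Hk1 [Ex2 Hx2]]]]].
    apply: leq_trans (Hdle T x1 CT Hk1) _; apply: Gbound_mono.
    by apply: leq_trans (Hsize T) _; rewrite -Ex2.
have Hinf : ~ finite_nat (Dom (U_graph k C psi Kd Ki)).
  move=> [s Hs]; apply: HdomA; exists s => n /HDom; exact: Hs.
case: (classic (bounded_above (U_graph k C psi Kd Ki))) => Hbd.
- by left; split.
- right; split=> //; split=> //.
  have [M HM] := log_small (b * (b.+1 * b.+1)) (psi [::]) (leq_trans (isT : 0 < 2) Hk).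
  have HgM : forall mm, M <= mm -> g mm < mm.
    move=> mm Hmm; have := HM mm Hmm; rewrite /g /Gbound.
    set X := (trunc_log 2 (mm * k).+1).+1.
    have -> : b * (b.+1 * X * b.+1) = b * (b.+1 * b.+1) * X by lia.
    by [].
  exists (iota 0 (g M).+1) => n [x [[[T [x' [CT [Hkx [Ex' Hx']]]]] _] Hnx]].
  rewrite mem_iota add0n ltnS.
  have H1 := Hdle T x CT Hkx.
  have H2 : size (tattr T) <= n by apply: leq_trans (Hsize T) _; rewrite -Ex'.
  case: (ltnP (size (tattr T)) M) => HsM.
  + apply: leq_trans Hnx _; apply: leq_trans H1 _; apply: Gbound_mono; exact: ltnW.
  + have := HgM _ HsM; lia.
Qed.
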